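(* Let $\pi\in\mathcal P(\mathbb R^d)$ satisfy the MALA assumption with constants $\mathsf M,\mathsf L,\mathsf m$, and set $\kappa=\mathsf M/\mathsf m$. Let $\mathsf Q$ be the (subgradient) MALA proposal kernel with step size $h$, where $$0<h\le\frac{1}{200}\min\Big\{\frac{1}{d\kappa\mathsf M},\ \frac{1}{d\mathsf L^2}\Big\}.$$ Then $$\inf_{x\in\mathbb R^d}\ \mathbb E_{y\sim\mathsf Q(x,\cdot)}[\alpha(x,y)]\ >\ \frac{13}{20}.$$
   Context: MALA assumption: $\pi$ has a positive density with $\log\pi=f+g$, where $f$ is concave and differentiable with $\|\nabla f(x)-\nabla f(y)\|\le\mathsf M\|x-y\|$, $g$ satisfies $|g(x)-g(y)|\le\mathsf L\|x-y\|$, and $\pi$ is $\mathsf m$-strongly log-concave, i.e. $\log\pi(\lambda x+(1-\lambda)y)\ge\lambda\log\pi(x)+(1-\lambda)\log\pi(y)+\frac{\mathsf m}{2}\lambda(1-\lambda)\|x-y\|^2$ for all $x,y$, $\lambda\in(0,1)$. Superdifferential: $\partial\log\pi(x)=\{v\in\mathbb R^d:\ \log\pi(y)\le\log\pi(x)+v\cdot(y-x)\ \forall y\}$ (nonempty by concavity). Fix any selection $v(x)\in\partial\log\pi(x)$; then $v(x)=\nabla f(x)+v_s(x)$ with $\|v_s(x)\|\le\mathsf L$. The subgradient MALA proposal with step size $h>0$ is $\mathsf Q(x,\cdot)=\mathcal N(x+hv(x),2hI)$, i.e. $x'=x+hv(x)+\sqrt{2h}\,\xi$, $\xi\sim\mathcal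 N(0,I)$. The acceptance probability is $\alpha(x,x')=\min\{1,\frac{\pi(x')\mathsf Q(x',x)}{\pi(x)\mathsf Q(x,x')}\}$. *)

(* Defs.v *)
From HB Require Import structures.
From mathcomp Require Import all_boot all_order all_algebra.
From mathcomp Require Import all_classical all_reals all_analysis.
Set Implicit Arguments. Unset Strict Implicit. Unset Printing Implicit Defensive.
Import Order.TTheory GRing.Theory Num.Theory.
Import numFieldNormedType.Exports.
Local Open Scope classical_set_scope.
Local Open Scope ring_scope.

Definition dotv {R : realType} {d : nat} (u v : 'rV[R]_d) : R :=
  \sum_(i < d) u ord0 i * v ord0 i.
Definition enorm {R : realType} {d : nat} (u : 'rV[R]_d) : R :=
  Num.sqrt (dotv u u).

Definition concave_fun {R : realType} {d : nat} (f : 'rV[R]_d -> R) : Prop :=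
  forall (x y : 'rV[R]_d) (l : R), 0 < l < 1 ->
    l * f x + (1 - l) * f y <= f (l *: x + (1 - l) *: y).

Definition is_gradient {R : realType} {d : nat}
  (f : 'rV[R]_d -> R) (G : 'rV[R]_d -> 'rV[R]_d) : Prop :=
  forall x : 'rV[R]_d, differentiable f x /\ forall u, 'd f x u = dotv (G x) u.

Definition strongly_concave {R : realType} {d : nat} (m : R)
  (U : 'rV[R]_d -> R) : Prop :=
  forall (x y : 'rV[R]_d) (l : R), 0 < l < 1 ->
    l * U x + (1 - l) * U y + m / 2 * l * (1 - l) * (enorm (x - y)) ^+ 2
    <= U (l *: x + (1 - l) *: y).

Definition superdiff {R : realType} {d : nat} (U : 'rV[R]_d -> R)
  (x v : 'rV[R]_d) : Prop :=
  forall y, U y <= U x + dotv v (y - x).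

Definition MALA_assumption {R : realType} {d : nat} (M L m : R)
  (pi_ : 'rV[R]_d -> R) : Prop :=
  (forall x, 0 < pi_ x) /\
  exists (f g : 'rV[R]_d -> R) (gradf : 'rV[R]_d -> 'rV[R]_d),
    (forall x, ln (pi_ x) = f x + g x) /\
    concave_fun f /\ is_gradient f gradf /\
    (forall x y, enorm (gradf x - gradf y) <= M * enorm (x - y)) /\
    (forall x y, `|g x - g y| <= L * enorm (x - y)) /\
    0 < m /\ strongly_concave m (fun x => ln (pi_ x)).

(* Density of the proposal Q(x, .) = N(x + h v(x), 2h I) at x'. *)
Definition mala_Q {R : realType} {d : nat} (h : R) (v : 'rV[R]_d -> 'rV[R]_d)
  (x x' : 'rV[R]_d) : R :=
  (Num.sqrt (4 * pi * h)) ^- d *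
  expR (- (enorm (x' - x - h *: v x)) ^+ 2 / (4 * h)).

Definition mala_alpha {R : realType} {d : nat} (pi_ : 'rV[R]_d -> R) (h : R)
  (v : 'rV[R]_d -> 'rV[R]_d) (x x' : 'rV[R]_d) : R :=
  Order.min 1 ((pi_ x' * mala_Q h v x' x) / (pi_ x * mala_Q h v x x')).

(* xi_1, ..., xi_d are mutually independent real random variables on P,
   each with law N(0,1); i.e. the random vector xi has law N(0, I_d). *)
Definition std_gaussian_vector {R : realType} {dO : measure_display}
  {O : measurableType dO} (P : probability O R) (d : nat)
  (xi : 'I_d -> O -> R) : Prop :=
  (forall i, measurable_fun setT (xi i)) /\
  (forall i (A : set R), measurable A ->
     P (xi i @^-1` A) = normal_prob 0 1 A) /\
  (forall B : 'I_d -> set R, (forall i, measurable (B i)) ->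
     P (\bigcap_(i in [set: 'I_d]) (xi i @^-1` B i)) =
     (\prod_(i < d) P (xi i @^-1` B i))%E).

(* Main.v *)
Require Import Defs.
From HB Require Import structures.
From mathcomp Require Import all_boot all_order all_algebra.
From mathcomp Require Import all_classical all_reals all_analysis.
From mathcomp Require Import ring lra.
From mathcomp Require Import measurable_realfun.
Import Order.TTheory GRing.Theory Num.Theory.
Import numFieldNormedType.Exports.
Local Open Scope classical_set_scope.
Local Open Scope ring_scope.
Set Implicit Arguments. Unset Strict Implicit. Unset Printing Implicit Defensive.

Section Dot.
Variables (R : realType) (d : nat).
Implicit Types (u w z : 'rV[R]_d).

Lemma dotvDl u w z : dotv (u + w) z = dotv u z + dotv w z.
Proof. by rewrite /dotv -big_split; apply: eq_bigr => i _; rewrite mxE mulrDl. Qed.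
Lemma dotvC u w : dotv u w = dotv w u.
Proof. by rewrite /dotv; apply: eq_bigr => i _; rewrite mulrC. Qed.
Lemma dotvDr u w z : dotv z (u + w) = dotv z u + dotv z w.
Proof. by rewrite dotvC dotvDl !(dotvC z). Qed.
Lemma dotvZl a u w : dotv (a *: u) w = a * dotv u w.
Proof. by rewrite /dotv mulr_sumr; apply: eq_bigr => i _; rewrite mxE mulrA. Qed.
Lemma dotvZr a u w : dotv w (a *: u) = a * dotv w u.
Proof. by rewrite dotvC dotvZl dotvC. Qed.
Lemma dotvNl u w : dotv (- u) w = - dotv u w.
Proof. by rewrite -scaleN1r dotvZl mulN1r. Qed.
Lemma dotvNr u w : dotv w (- u) = - dotv w u.
Proof. by rewrite dotvC dotvNl dotvC. Qed.
Lemma dotvBl u w z : dotv (u - w) z = dotv u z - dotv w z.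
Proof. by rewrite dotvDl dotvNl. Qed.
Lemma dotvBr u w z : dotv z (u - w) = dotv z u - dotv z w.
Proof. by rewrite dotvDr dotvNr. Qed.
Lemma dotv_ge0 u : 0 <= dotv u u.
Proof. by rewrite /dotv sumr_ge0 // => i _; rewrite -expr2 sqr_ge0. Qed.
Lemma enorm_ge0 u : 0 <= enorm u.
Proof. exact: sqrtr_ge0. Qed.
Lemma enorm_sq u : enorm u ^+ 2 = dotv u u.
Proof. by rewrite /enorm sqr_sqrtr // dotv_ge0. Qed.
Lemma enormN u : enorm (- u) = enorm u.
Proof. by rewrite /enorm dotvNl dotvNr opprK. Qed.
Lemma enormZ a u : enorm (a *: u) = `|a| * enorm u.
Proof.
by rewrite /enorm dotvZl dotvZr mulrA -expr2 sqrtrM ?sqr_ge0 // sqrtr_sqr.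
Qed.

Lemma dotv_quad u w t : 0 <= t ^+ 2 * dotv u u - 2 * t * dotv u w + dotv w w.
Proof.
have := dotv_ge0 (t *: u - w).
rewrite dotvBl !dotvBr !dotvZl !dotvZr (dotvC w u).
by move=> H; nra.
Qed.

Lemma dotv0_eq u : dotv u u = 0 -> forall w, dotv u w <= 0.
Proof.
move=> H0 w; rewrite leNgt; apply/negP => Hp.
have := dotv_quad u w ((dotv w w + 1) / (2 * dotv u w)).
rewrite H0 mulr0 add0r.
have -> : 2 * ((dotv w w + 1) / (2 * dotv u w)) * dotv u w = dotv w w + 1.
  by field; rewrite gt_eqF.
lra.
Qed.

Lemma CS u w : dotv u w <= enorm u * enorm w.
Proof.
have [a0|apos] := eqVneq (enorm u) 0.
  rewrite a0 mul0r; apply: dotv0_eq.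
  by rewrite -enorm_sq a0 expr0n.
have [b0|bpos] := eqVneq (enorm w) 0.
  rewrite b0 mulr0 dotvC; apply: dotv0_eq.
  by rewrite -enorm_sq b0 expr0n.
have ha : 0 < enorm u by rewrite lt0r apos enorm_ge0.
have hb : 0 < enorm w by rewrite lt0r bpos enorm_ge0.
have := dotv_quad u w (enorm w / enorm u).
rewrite -!enorm_sq => H.
have E : (enorm w / enorm u) ^+ 2 * enorm u ^+ 2 = enorm w ^+ 2.
  by field; rewrite gt_eqF.
rewrite E in H.
have H2 : 2 * (enorm w / enorm u) * dotv u w <= 2 * enorm w ^+ 2 by lra.
have H3 : dotv u w <= enorm w * enorm u.
  rewrite -(ler_pM2l (_ : 0 < 2 * (enorm w / enorm u))); last first.
    by rewrite mulr_gt0 // divr_gt0.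
  have E2 : 2 * (enorm w / enorm u) * (enorm w * enorm u) = 2 * enorm w ^+ 2.
    by field; rewrite gt_eqF.
  by rewrite E2.
by rewrite mulrC.
Qed.

Lemma CSN u w : - dotv u w <= enorm u * enorm w.
Proof. by rewrite -dotvNl -(enormN u) CS. Qed.

Lemma dotv_add2 u w : dotv (u + w) (u + w) <= 2 * dotv u u + 2 * dotv w w.
Proof.
have := dotv_ge0 (u - w).
rewrite ?dotvDl ?dotvDr ?dotvNl ?dotvNr (dotvC w u); lra.
Qed.

End Dot.
Section VS.
Variables (R : realType) (d : nat).
Lemma dlim_le (f : 'rV[R]_d -> R) (x q : 'rV[R]_d) (c : R) :
  differentiable f x ->
  (forall t : R, 0 < t -> t^-1 * (f (t *: q + x) - f x) <= c) ->
  'd f x q <= c.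
Proof.
move=> df H.
have dv := @diff_derivable _ _ _ f x q df.
rewrite -deriveE //.
rewrite /derivable in dv.
rewrite /derive.
set G := (fun h0 : R => _) in dv *.
have cvr : G @ 0^'+ --> lim (G @ 0^').
  apply: cvg_trans dv.
  move=> A /=; rewrite !near_simpl /= !near_withinE => HA.
  apply: filterS HA => t HP tpos; apply: HP.
  by rewrite gt_eqF.
apply: (cvgr_to_le cvr).
near=> t.
rewrite /G /=.
apply: H.
near: t. exact: nbhs_right_gt.
Unshelve. all: by end_near.
Qed.

End VS.

Lemma vs_bound (R : realType) (d : nat) (f g U : 'rV[R]_d -> R)
  (gradf : 'rV[R]_d -> 'rV[R]_d) (L : R) (x vv : 'rV[R]_d) :
  0 <= L -> (forall y, U y = f y + g y) -> is_gradient f gradf ->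
  (forall x y, `|g x - g y| <= L * enorm (x - y)) ->
  superdiff U x vv -> enorm (vv - gradf x) <= L.
Proof.
move=> L0 UE gf gL sd; have [df dfE] := gf x.
set q := gradf x - vv.
have key : dotv (gradf x) q <= dotv vv q + L * enorm q.
  rewrite -dfE; apply: dlim_le => // t t0.
  have h1 := sd (t *: q + x).
  rewrite !UE addrK dotvZr in h1.
  have h2 := gL (t *: q + x) x.
  rewrite addrK enormZ (gtr0_norm t0) in h2.
  have h3 : f (t *: q + x) - f x <= t * (dotv vv q + L * enorm q).
    move: h2; rewrite ler_norml => /andP [h2 _]; nra.
  rewrite ler_pdivrMl //.
have hq : dotv q q <= L * enorm q.
  by rewrite /q dotvBl; lra.
rewrite -enormN opprB -/q.
have [e0|epos] := eqVneq (enorm q) 0; first by rewrite e0.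
have ep : 0 < enorm q by rewrite lt0r epos enorm_ge0.
rewrite -enorm_sq expr2 in hq.
by rewrite -(ler_pM2r ep).
Qed.


Lemma dotv3 (R : realType) (d : nat) (p q r : 'rV[R]_d) a b c :
  dotv (a *: p + b *: q + c *: r) (a *: p + b *: q + c *: r) =
  a ^+ 2 * dotv p p + b ^+ 2 * dotv q q + c ^+ 2 * dotv r r
  + 2 * a * b * dotv p q + 2 * a * c * dotv p r + 2 * b * c * dotv q r.
Proof.
rewrite !dotvDl !dotvDr !dotvZl !dotvZr (dotvC q p) (dotvC r p) (dotvC r q).
ring.
Qed.

Lemma ratio_expR (R : realType) (d : nat) (pi_ : 'rV[R]_d -> R) (h : R)
  (v : 'rV[R]_d -> 'rV[R]_d) (x y : 'rV[R]_d) :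
  (forall x, 0 < pi_ x) -> 0 < h ->
  mala_alpha pi_ h v x y = Order.min 1 (expR (ln (pi_ y) - ln (pi_ x)
     - enorm (x - y - h *: v y) ^+ 2 / (4 * h)
     + enorm (y - x - h *: v x) ^+ 2 / (4 * h))).
Proof.
move=> pp h0; rewrite /mala_alpha /mala_Q; congr Order.min.
set c := (Num.sqrt (4 * pi * h)) ^- d.
have c0 : 0 < c.
  by rewrite /c invr_gt0 exprn_gt0 // sqrtr_gt0 !mulr_gt0 // pi_gt0.
have ey : pi_ y = expR (ln (pi_ y)) by rewrite lnK // posrE.
have ex : pi_ x = expR (ln (pi_ x)) by rewrite lnK // posrE.
rewrite {1}ey {1}ex.
set ly := ln (pi_ y); set lx := ln (pi_ x).
set n1 := enorm (x - y - h *: v y) ^+ 2; set n2 := enorm (y - x - h *: v x) ^+ 2.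
have -> : ly - lx - n1 / (4 * h) + n2 / (4 * h) =
   (ly + (- n1 / (4 * h))) - (lx + (- n2 / (4 * h))) by rewrite !mulNr; ring.
rewrite expRB !expRD.
by field; rewrite !gt_eqF ?expR_gt0.
Qed.

Lemma dotv3g (R : realType) (d : nat) (p q r : 'rV[R]_d) a b c a' b' c' :
  dotv (a *: p + b *: q + c *: r) (a' *: p + b' *: q + c' *: r) =
  a * a' * dotv p p + b * b' * dotv q q + c * c' * dotv r r
  + (a * b' + b * a') * dotv p q + (a * c' + c * a') * dotv p r
  + (b * c' + c * b') * dotv q r.
Proof.
rewrite !dotvDl !dotvDr !dotvZl !dotvZr (dotvC q p) (dotvC r p) (dotvC r q).
ring.
Qed.

Lemma alpha_lb (R : realType) (d : nat) (M L m h : R)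
  (pi_ : 'rV[R]_d -> R) (v : 'rV[R]_d -> 'rV[R]_d)
  (f g : 'rV[R]_d -> R) (gradf : 'rV[R]_d -> 'rV[R]_d) (x xi0 : 'rV[R]_d) :
  (forall x, 0 < pi_ x) ->
  (forall x, ln (pi_ x) = f x + g x) ->
  is_gradient f gradf ->
  (forall x y, enorm (gradf x - gradf y) <= M * enorm (x - y)) ->
  (forall x y, `|g x - g y| <= L * enorm (x - y)) ->
  0 < m -> strongly_concave m (fun x => ln (pi_ x)) ->
  (forall x, superdiff (fun y => ln (pi_ y)) x (v x)) ->
  0 < h -> 0 <= L -> 200 * h * M ^+ 2 <= m -> 200 * h * L ^+ 2 <= 1 ->
  89 / 100 - (2 * h * M ^+ 2 / m + 5 * h * L ^+ 2) * dotv xi0 xi0 <=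
  mala_alpha pi_ h v x (x + h *: v x + Num.sqrt (2 * h) *: xi0).
Proof.
move=> pp lnE gf gM gL m0 sc sd h0 L0 hM hL.
rewrite ratio_expR //.
set V := v x; set s := Num.sqrt (2 * h).
set y := x + h *: V + s *: xi0.
have s2 : s ^+ 2 = 2 * h by rewrite sqr_sqrtr // mulr_ge0 // ltW.
have s0 : 0 <= s by exact: sqrtr_ge0.
set U := fun u => ln (pi_ u).
set z := h *: V + s *: xi0.
have yx : y - x = z by apply/matrixP => i j; rewrite !mxE; ring.
have xy : x - y = - z by rewrite -yx opprB.
have SC : dotv (v y) z + m / 4 * dotv z z <= U y - U x.
  have h1 := sc x y (1 / 2) (ltac:(apply/andP; split; lra)).
  have h2 := sd y ((1 / 2) *: x + (1 - 1 / 2) *: y).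
  have e1 : (1 / 2) *: x + (1 - 1 / 2) *: y - y = (- (1 / 2)) *: z.
    by apply/matrixP => i j; rewrite !mxE; ring.
  rewrite e1 in h2.
  rewrite dotvZr in h2; rewrite xy enormN enorm_sq in h1.
  rewrite /U; nra.
set w := v y - V.
have vyE : v y = 1 *: V + 0 *: xi0 + 1 *: w.
  by apply/matrixP => i j; rewrite !mxE; ring.
have zE : z = h *: V + s *: xi0 + 0 *: w.
  by apply/matrixP => i j; rewrite !mxE; ring.
have N1E : x - y - h *: v y = (- (2 * h)) *: V + (- s) *: xi0 + (- h) *: w.
  by apply/matrixP => i j; rewrite !mxE; ring.
have N2E : y - x - h *: V = 0 *: V + s *: xi0 + 0 *: w.
  by apply/matrixP => i j; rewrite !mxE; ring.
have ID : - enorm (x - y - h *: v y) ^+ 2 / (4 * h)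
          + enorm (y - x - h *: V) ^+ 2 / (4 * h)
        = - dotv (v y) z + s / 2 * dotv xi0 w - h / 4 * dotv w w.
  rewrite !enorm_sq N1E N2E {1}vyE {1}zE !dotv3g.
  have -> : - s * - s = 2 * h by rewrite mulrNN -expr2 s2.
  have -> : s * s = 2 * h by rewrite -expr2 s2.
  by field; rewrite gt_eqF.
set a := gradf y - gradf x.
set vsy := v y - gradf y; set vsx := V - gradf x.
have wE : w = a + vsy - vsx by apply/matrixP => i j; rewrite !mxE; ring.
have ea : enorm a <= M * enorm z by rewrite /a -yx; exact: gM.
have ea0 : 0 <= enorm a := enorm_ge0 a.
have ey : enorm vsy <= L.
  apply: (vs_bound (f := f) (g := g) (U := U)) => //; exact: sd.
have ex : enorm vsx <= L.
  apply: (vs_bound (f := f) (g := g) (U := U)) => //; exact: sd.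
set X := enorm xi0; set E := enorm z.
have X0 : 0 <= X := enorm_ge0 xi0.
have E0 : 0 <= E := enorm_ge0 z.
have NX : dotv xi0 xi0 = X ^+ 2 by rewrite enorm_sq.
have NZ : dotv z z = E ^+ 2 by rewrite enorm_sq.
have Dw : dotv xi0 w = dotv xi0 a + dotv xi0 vsy - dotv xi0 vsx.
  by rewrite wE dotvBr dotvDr.
have C1 : - dotv xi0 a <= X * (M * E).
  apply: (le_trans (CSN xi0 a)); exact: ler_wpM2l.
have C2 : - dotv xi0 vsy <= X * L.
  apply: (le_trans (CSN xi0 vsy)); exact: ler_wpM2l.
have C3 : dotv xi0 vsx <= X * L.
  apply: (le_trans (CS xi0 vsx)); exact: ler_wpM2l.
have Na : dotv a a <= M ^+ 2 * E ^+ 2.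
  have ME0 : 0 <= M * E by exact: le_trans ea.
  have H := ler_pM ea0 ea0 ea ea.
  rewrite -enorm_sq expr2 (_ : M ^+ 2 * E ^+ 2 = M * E * (M * E)) //; ring.
have Nvy : dotv vsy vsy <= L ^+ 2.
  have H := ler_pM (enorm_ge0 vsy) (enorm_ge0 vsy) ey ey.
  by rewrite -enorm_sq expr2.
have Nvx : dotv vsx vsx <= L ^+ 2.
  have H := ler_pM (enorm_ge0 vsx) (enorm_ge0 vsx) ex ex.
  by rewrite -enorm_sq expr2.
have Nw : dotv w w <= 2 * M ^+ 2 * E ^+ 2 + 8 * L ^+ 2.
  have := dotv_add2 a (vsy - vsx).
  have := dotv_add2 vsy (- vsx).
  rewrite dotvNl dotvNr opprK.
  have -> : a + (vsy - vsx) = w by rewrite wE addrA.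
  lra.
have T1 : s / 2 * (X * (M * E)) <= m / 16 * E ^+ 2 + 2 * h * M ^+ 2 / m * X ^+ 2.
  have q0 : 0 <= (m * E / 4 - s * M * X) ^+ 2 / m by rewrite divr_ge0 ?sqr_ge0 ?ltW.
  have : m / 16 * E ^+ 2 + 2 * h * M ^+ 2 / m * X ^+ 2 - s / 2 * (X * (M * E))
        = (m * E / 4 - s * M * X) ^+ 2 / m.
    by rewrite -s2; field; rewrite gt_eqF.
  lra.
have T2 : s * (X * L) <= 5 * h * L ^+ 2 * X ^+ 2 + 1 / 10.
  have q0 : 0 <= 5 / 2 * (s * X * L - 1 / 5) ^+ 2 by rewrite mulr_ge0 ?sqr_ge0.
  have : 5 * h * L ^+ 2 * X ^+ 2 + 1 / 10 - s * (X * L)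
        = 5 / 2 * (s * X * L - 1 / 5) ^+ 2.
    have -> : 5 / 2 * (s * X * L - 1 / 5) ^+ 2 =
      5 / 2 * s ^+ 2 * X ^+ 2 * L ^+ 2 - s * (X * L) + 1 / 10 by field.
    by rewrite s2; field.
  lra.
have T3 : h / 4 * dotv w w <= m / 400 * E ^+ 2 + 1 / 100.
  have : h / 4 * dotv w w <= h / 4 * (2 * M ^+ 2 * E ^+ 2 + 8 * L ^+ 2).
    by rewrite ler_wpM2l // divr_ge0 // ltW.
  have E2 : 0 <= E ^+ 2 := sqr_ge0 E.
  nra.
have sx : s / 2 * dotv xi0 w >= - (s / 2 * (X * (M * E))) - s * (X * L).
  rewrite Dw.
  have : 0 <= s / 2 by rewrite divr_ge0.
  nra.
have LB : - ((2 * h * M ^+ 2 / m + 5 * h * L ^+ 2) * X ^+ 2) - 11 / 100 <=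
    U y - U x - enorm (x - y - h *: v y) ^+ 2 / (4 * h)
      + enorm (y - x - h *: V) ^+ 2 / (4 * h).
  have -> : U y - U x - enorm (x - y - h *: v y) ^+ 2 / (4 * h)
      + enorm (y - x - h *: V) ^+ 2 / (4 * h) = U y - U x +
      (- enorm (x - y - h *: v y) ^+ 2 / (4 * h)
      + enorm (y - x - h *: V) ^+ 2 / (4 * h)) by rewrite mulNr; ring.
  rewrite ID.
  have E2 : 0 <= E ^+ 2 := sqr_ge0 E.
  rewrite NZ in SC.
  nra.
have b0 : 0 <= (2 * h * M ^+ 2 / m + 5 * h * L ^+ 2) * X ^+ 2.
  have hm : 0 <= 2 * h * M ^+ 2 / m.
    apply: divr_ge0; last lra.
    by apply: mulr_ge0; [apply: mulr_ge0; lra|exact: sqr_ge0].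
  have hl : 0 <= 5 * h * L ^+ 2.
    by apply: mulr_ge0; [apply: mulr_ge0; lra|exact: sqr_ge0].
  by rewrite mulr_ge0 ?sqr_ge0 // addr_ge0.
rewrite /Order.min; case: ifP => _; first by rewrite NX; lra.
apply: le_trans (expR_ge1Dx _).
move: LB; rewrite NX /U /=; lra.
Qed.


Lemma pdf_bound (R : realType) (x : R) :
  x ^+ 2 * normal_pdf 0 1 x <= 16 / 3 * normal_pdf 0 2 x.
Proof.
rewrite /normal_pdf oner_eq0 (_ : (2:R) == 0 = false); last by rewrite pnatr_eq0.
have p2 : normal_peak (2:R) = normal_peak 1 / 2.
  rewrite /normal_peak.
  have -> : (2:R) ^+ 2 * pi *+ 2 = 2 ^+ 2 * (1 ^+ 2 * pi *+ 2).
    by rewrite !mulr2n; ring.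
  rewrite sqrtrM ?sqr_ge0 // sqrtr_sqr ger0_norm // invfM mulrC.
  by [].
have f2 : normal_fun 0 1 x = normal_fun 0 2 x * expR (- (3 / 8 * x ^+ 2)).
  by rewrite /normal_fun -expRD; congr expR; rewrite !subr0 !mulr2n; field.
have g : x ^+ 2 * expR (- (3 / 8 * x ^+ 2)) <= 8 / 3.
  have := expR_ge1Dx (3 / 8 * x ^+ 2).
  rewrite expRN.
  have E0 : 0 < expR (3 / 8 * x ^+ 2) by exact: expR_gt0.
  move=> H.
  rewrite ler_pdivrMr //.
  have := sqr_ge0 x; lra.
rewrite f2 p2.
have a0 : 0 <= normal_peak (1:R) by exact: normal_peak_ge0.
have b0 : 0 <= normal_fun 0 2 x by exact: normal_fun_ge0.
have -> : x ^+ 2 * (normal_peak 1 * (normal_fun 0 2 x * expR (- (3 / 8 * x ^+ 2)))) =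
  (normal_peak 1 * normal_fun 0 2 x) * (x ^+ 2 * expR (- (3 / 8 * x ^+ 2))) by ring.
have -> : 16 / 3 * (normal_peak 1 / 2 * normal_fun 0 2 x) =
  (normal_peak 1 * normal_fun 0 2 x) * (8 / 3) by field.
by rewrite ler_wpM2l // mulr_ge0.
Qed.

Local Open Scope ereal_scope.

Section moment.
Context {R : realType}.
Local Notation mu := (@lebesgue_measure R).
Local Notation nu := (normal_prob (0:R) 1).

Lemma normal_change (f : R -> \bar R) : (forall x, 0 <= f x) ->
  measurable_fun setT f ->
  \int[nu]_x f x = \int[mu]_x (f x * (normal_pdf 0 1 x)%:E).
Proof.
move=> f0 mf.
have numu : nu `<< mu := normal_prob_dominates 0 1.
rewrite -(Radon_Nikodym_SigmaFinite.change_of_variables numu) //.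
apply: ae_eq_integral => //.
- apply: emeasurable_funM => //.
  exact: measurable_int (Radon_Nikodym_SigmaFinite.f_integrable numu).
- apply: emeasurable_funM => //; apply/measurable_EFinP.
  exact: measurable_normal_pdf.
- apply: ae_eqe_mul2l.
  apply: integral_ae_eq => //.
  + exact: Radon_Nikodym_SigmaFinite.f_integrable numu.
  + apply/measurable_EFinP; exact: measurable_normal_pdf.
  + move=> E _ mE.
    by rewrite -Radon_Nikodym_SigmaFinite.f_integral.
Qed.


Lemma normal_moment2 : \int[nu]_x (x ^+ 2)%:E <= (16 / 3)%:E.
Proof.
have mX : measurable_fun [set: R] (fun x : R => x ^+ 2)%R.
  by apply: measurable_funX; exact: measurable_id.
rewrite normal_change //; last first.
  - by apply/measurable_EFinP.
  - by move=> x; rewrite lee_fin sqr_ge0.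
apply: (@le_trans _ _ (\int[mu]_x ((16 / 3) * normal_pdf 0 2 x)%:E)).
  apply: ge0_le_integral => //.
  - by move=> x _; rewrite -EFinM lee_fin mulr_ge0 ?sqr_ge0 ?normal_pdf_ge0.
  - apply: emeasurable_funM; first exact/measurable_EFinP.
    by apply/measurable_EFinP; exact: measurable_normal_pdf.
  - apply/measurable_EFinP; apply: measurable_funM => //.
    exact: measurable_normal_pdf.
  - by move=> x _; rewrite -EFinM lee_fin pdf_bound.
under eq_integral do rewrite EFinM.
rewrite integralZl //; last exact: integrable_normal_pdf.
by rewrite integral_normal_pdf mule1.
Qed.
End moment.

Lemma coord_moment (R : realType) (dO : measure_display) (O : measurableType dO)
  (P : probability O R) (X : O -> R) :
  measurable_fun setT X ->
  (forall A : set R, measurable A -> P (X @^-1` A) = normal_prob 0 1 A) ->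
  \int[P]_w ((X w) ^+ 2)%:E <= (16 / 3)%:E.
Proof.
move=> mX law.
pose X' : O -> measurableTypeR R := X.
have mX' : measurable_fun setT X' := mX.
have mS : measurable_fun [set: measurableTypeR R] (fun x : measurableTypeR R => (x ^+ 2)%:E).
  by apply/measurable_EFinP; apply: measurable_funX; exact: measurable_id.
have := @ge0_integral_pushforward _ _ _ _ _ _ mX' P setT (fun x : measurableTypeR R => (x ^+ 2)%:E)
  measurableT mS (fun y _ => ltac:(by rewrite /= lee_fin sqr_ge0)).
rewrite preimage_setT => <-.
apply: (le_trans _ (normal_moment2 (R:=R))).
rewrite le_eqVlt; apply/orP; left; apply/eqP.
apply: eq_measure_integral => A mA _.
by rewrite /pushforward; exact: law.
Qed.

Local Close Scope ereal_scope.
Local Open Scope ereal_scope.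
Lemma ge0_le_integral_nm (d : measure_display) (T : measurableType d) (R : realType)
  (mu : {measure set T -> \bar R}) (f g : T -> \bar R) :
  (forall x, 0 <= f x) -> (forall x, f x <= g x) ->
  \int[mu]_x f x <= \int[mu]_x g x.
Proof.
move=> f0 fg.
have g0 : forall x, 0 <= g x by move=> x; exact: le_trans (f0 x) (fg x).
rewrite !ge0_integralTE //.
apply: ereal_sup_le => _ [h hf <-]; exists h => // x.
exact: le_trans (hf x) (fg x).
Qed.

Lemma int_lb (R : realType) (d : nat) (dO : measure_display) (O : measurableType dO)
  (P : probability O R) (xi : 'I_d -> O -> R) (F : O -> R) (beta : R) :
  std_gaussian_vector P xi -> (0 <= beta)%R -> (beta * d%:R <= 7 / 200)%R ->
  (forall w, 0 <= F w)%R ->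
  (forall w, 89 / 100 - beta * \sum_(i < d) (xi i w) ^+ 2 <= F w)%R ->
  (7 / 10)%:E <= \int[P]_w (F w)%:E.
Proof.
move=> [mxi [law _]] b0 bd F0 FG.
set S := fun w => (\sum_(i < d) (xi i w) ^+ 2)%R.
set G := fun w => Num.max (89 / 100 - beta * S w)%R 0%R.
have mS : measurable_fun setT S.
  by apply: measurable_sum => i; apply: measurable_funX; exact: mxi.
have mG : measurable_fun setT G.
  apply: measurable_maxr => //; apply: measurable_funB => //.
  exact: measurable_funM.
have G0 : forall w, (0 <= G w)%R by move=> w; rewrite /G le_max lexx orbT.
have S0 : forall w, (0 <= S w)%R.
  by move=> w; rewrite /S sumr_ge0 // => i _; rewrite sqr_ge0.
have H1 : \int[P]_w (G w)%:E <= \int[P]_w (F w)%:E.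
  apply: ge0_le_integral_nm => w; rewrite lee_fin //.
  by rewrite /G ge_max F0 FG.
apply: le_trans H1.
have H2 : (89 / 100)%:E <= \int[P]_w (G w)%:E + \int[P]_w (beta * S w)%:E.
  rewrite -ge0_integralD //; last 4 first.
  - by move=> w _; rewrite lee_fin.
  - exact/measurable_EFinP.
  - by move=> w _; rewrite lee_fin mulr_ge0.
  - by apply/measurable_EFinP; exact: measurable_funM.
  apply: le_trans (_ : \int[P]_w (cst (89 / 100)%:E w) <= _).
    rewrite integral_cst //.
    have P1 := probability_setT P.
    apply: (@eq_ind _ 1 (fun t => (89 / 100)%:E <= (89 / 100)%:E * t)).
      by rewrite mule1.
    exact: esym P1.
  apply: ge0_le_integral => //.
  - by move=> w _; rewrite lee_fin.
  - apply: emeasurable_funD; apply/measurable_EFinP => //.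
    exact: measurable_funM.
  - move=> w _; rewrite /= -EFinD lee_fin /G.
    have H : (89 / 100 - beta * S w <= Num.max (89 / 100 - beta * S w) 0)%R.
      by rewrite le_max lexx.
    lra.
have H3 : \int[P]_w (beta * S w)%:E <= (beta * (d%:R * (16 / 3)))%:E.
  under eq_integral do rewrite EFinM.
  rewrite ge0_integralZl //; last 2 first.
  - exact/measurable_EFinP.
  - by move=> w _; rewrite lee_fin.
  rewrite EFinM lee_wpmul2l ?lee_fin //.
  under eq_integral do rewrite /S -sumEFin.
  rewrite ge0_integral_sum //; last 2 first.
  - by move=> i; apply/measurable_EFinP; apply: measurable_funX; exact: mxi.
  - by move=> i w _; rewrite lee_fin sqr_ge0.
  rewrite (_ : (d%:R * (16 / 3))%R = (\sum_(i < d) (16 / 3 : R))%R); last first.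
    by rewrite sumr_const card_ord mulr_natl.
  rewrite -sumEFin.
  apply: lee_sum => i _.
  apply: coord_moment => //; exact: law.
have H4 : \int[P]_w (G w)%:E + \int[P]_w (beta * S w)%:E <=
    \int[P]_w (G w)%:E + (beta * (d%:R * (16 / 3)))%:E by rewrite leeD2l.
have H5 := le_trans H2 H4.
rewrite -leeBlDr // in H5.
apply: le_trans H5.
rewrite -EFinB lee_fin.
have : (beta * (d%:R * (16 / 3)) <= 7 / 200 * (16 / 3))%R.
  by move: bd; lra.
lra.
Qed.

Local Close Scope ereal_scope.

Lemma alpha_ge0 (R : realType) (d : nat) (pi_ : 'rV[R]_d -> R) (h : R)
  (v : 'rV[R]_d -> 'rV[R]_d) (x y : 'rV[R]_d) :
  (forall x, 0 < pi_ x) -> 0 < h -> 0 <= mala_alpha pi_ h v x y.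
Proof.
move=> pp h0; rewrite ratio_expR //.
Qed.

Unset Implicit Arguments.
Theorem mainTheorem6 (R : realType) (d : nat) (M L m h : R)
  (pi_ : 'rV[R]_d -> R) (v : 'rV[R]_d -> 'rV[R]_d)
  (dO : measure_display) (O : measurableType dO) (P : probability O R)
  (xi : 'I_d -> O -> R) :
  MALA_assumption M L m pi_ ->
  (forall x, superdiff (fun y => ln (pi_ y)) x (v x)) ->
  0 < h ->
  200 * h * (d%:R * (M / m) * M) <= 1 ->
  200 * h * (d%:R * L ^+ 2) <= 1 ->
  std_gaussian_vector P xi ->
  ((13 / 20)%:E <
    ereal_inf (range (fun x : 'rV[R]_d =>
      \int[P]_w (mala_alpha pi_ h v x
                   (x + h *: v x + Num.sqrt (2 * h) *: \row_i xi i w))%:E)))%E.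
Proof.
move=> [pp [f [g [gradf [lnE [fc [gf [gM [gL [m0 sc]]]]]]]]]] sd h0 hd hdL gauss.
apply: (@lt_le_trans _ _ (7 / 10)%:E); first by rewrite lte_fin; lra.
apply: le_ereal_inf_tmp => _ [x _ <-].
have [d0|dpos] := eqVneq d 0%N.
  apply: (@int_lb _ _ _ _ _ _ _ 0).
  - exact: gauss.
  - exact: lexx.
  - by rewrite mul0r; lra.
  - by move=> w; exact: alpha_ge0.
  move=> w; rewrite mul0r subr0.
  set y := x + _ + _.
  have yx : y = x.
    by apply/matrixP => i [j jd]; exfalso; move: jd; rewrite d0 ltn0.
  have n0 : forall u : 'rV[R]_d, enorm u = 0.
    move=> u; rewrite /enorm /dotv big1 ?sqrtr0 // => i _.
    by case: i => i id; exfalso; move: id; rewrite d0 ltn0.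
  rewrite ratio_expR // yx !n0 expr0n /= mul0r subrr oppr0 !addr0 expR0.
  by rewrite /Order.min ltxx; lra.
have d1 : (1 <= d%:R :> R).
  by rewrite (_ : 1 = 1%:R) // ler_nat lt0n.
have L0 : 0 <= L.
  pose c : 'rV[R]_d := const_mx 1.
  have := gL 0 c; rewrite sub0r enormN => H.
  have ec : 0 < enorm c.
    rewrite /enorm sqrtr_gt0 /dotv.
    rewrite (eq_bigr (fun _ => 1)); last by move=> i _; rewrite /c !mxE mulr1.
    by rewrite sumr_const card_ord ltr0n lt0n.
  have : 0 <= L * enorm c := le_trans (normr_ge0 _) H.
  nra.
have hM : 200 * h * M ^+ 2 <= m.
  have X0 : 0 <= 200 * h * (M / m * M).
    rewrite (_ : M / m * M = M ^+ 2 / m); last by rewrite expr2; field; rewrite gt_eqF.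
    by apply: mulr_ge0; [apply: mulr_ge0; lra | apply: divr_ge0; [exact: sqr_ge0 | lra]].
  have E1 : 200 * h * (d%:R * (M / m) * M) = d%:R * (200 * h * (M / m * M)) by ring.
  have E2 : 200 * h * M ^+ 2 = m * (200 * h * (M / m * M)).
    by field; rewrite gt_eqF.
  rewrite E2; rewrite E1 in hd.
  have : 200 * h * (M / m * M) <= 1 by nra.
  move=> H; rewrite -[X in _ <= X]mulr1 ler_wpM2l //; exact: ltW.
have hL : 200 * h * L ^+ 2 <= 1.
  have : 0 <= 200 * h * L ^+ 2 by rewrite mulr_ge0 ?sqr_ge0 // mulr_ge0 // ltW.
  have E3 : 200 * h * (d%:R * L ^+ 2) = d%:R * (200 * h * L ^+ 2) by ring.
  rewrite E3 in hdL; nra.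
apply: (@int_lb _ _ _ _ _ _ _ (2 * h * M ^+ 2 / m + 5 * h * L ^+ 2)).
- exact: gauss.
- apply: addr_ge0.
    apply: divr_ge0; last lra.
    by apply: mulr_ge0; [apply: mulr_ge0; lra|exact: sqr_ge0].
  by apply: mulr_ge0; [apply: mulr_ge0; lra|exact: sqr_ge0].
- have -> : (2 * h * M ^+ 2 / m + 5 * h * L ^+ 2) * d%:R =
      1 / 100 * (200 * h * (d%:R * (M / m) * M)) + 5 / 200 * (200 * h * (d%:R * L ^+ 2)).
    by field; rewrite gt_eqF.
  lra.
- by move=> w; exact: alpha_ge0.
move=> w.
have := alpha_lb x (\row_i xi i w) pp lnE gf gM gL m0 sc sd h0 L0 hM hL.
have -> : dotv (\row_i xi i w) (\row_i xi i w) = \sum_(i < d) xi i w ^+ 2.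
  by rewrite /dotv; apply: eq_bigr => i _; rewrite !mxE expr2.
by [].
Qed.
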